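(* Consider the CoDGraD iteration described below. Assume that ${\bf A}_{\rm sde}$ has $1$ as a simple eigenvalue and all other eigenvalues in the open unit disk, and that there is $L>0$ with $\|\nabla g_i({\bf x})-\nabla g_i({\bf y})\|_2\le L\|{\bf x}-{\bf y}\|_2$ for all ${\bf x},{\bf y}\in\mathbb{R}^N$, $1\le i\le n$. Then for every $k\ge0$, $$\Big\|\sum_{i=1}^n(a_i-a_{n+i})\nabla g_i({\bf x}_i(k))-\tilde w\,\nabla f(\bar{\bf x}(k))\Big\|_2\le L\Big(\sum_{i=1}^{2n}|a_i|\Big)\max_{1\le i\le n}\|{\bf x}_i(k)-\bar{\bf x}(k)\|_2.$$
   Context: Setting: $f_1,\dots,f_m:\mathbb{R}^N\to\mathbb{R}$, $f=\sum_l f_l$; ${\bf B}=(b(i,l))$ real $n\times m$, ${\bf A}=(a(i,j))$ real $n\times n$ with ${\bf A}{\bf B}={\bf 1}_{n\times m}$ (all-ones); $g_i=\sum_l b(i,l)f_l$ differentiable (so $f=\sum_j a(i,j)g_j$ for each $i$). Let $t_+=\max(t,0)$, $w_i=\big(\sum_j|a(i,j)|\big)^{-1}$, $\tilde a(i,j)=w_ia(i,j)$, $\tilde{\bf A}_\pm=\big((\pm\tilde a(i,j))_+\big)$, ${\bf A}_{\rm sde}=\begin{pmatrix}\tilde{\bf A}_+&\tilde{\bf A}_-\\ \tilde{\bf A}_+&\tilde{\bf A}_-\end{pmatrix}$. CoDGraD iteration: positive step sizes $\alpha_k$, arbitrary ${\bf x}_i(0)\in\mathbb{R}^N$, and for $k\ge0$: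 ${\bf y}_i^\pm(k)={\bf x}_i(k)\mp\alpha_k\nabla g_i({\bf x}_i(k))$, ${\bf x}_i(k+1)=\sum_{j=1}^n w_i\{(a(i,j))_+{\bf y}_j^+(k)+(-a(i,j))_+{\bf y}_j^-(k)\}$. Let ${\bf a}_{\rm sde}=(a_1,\dots,a_{2n})^T$ be the unique vector with ${\bf a}_{\rm sde}^T{\bf A}_{\rm sde}={\bf a}_{\rm sde}^T$ and $\sum_i a_i=1$; $\bar{\bf x}(k)=\sum_{i=1}^n(a_i+a_{n+i}){\bf x}_i(k)$; $\tilde w=\sum_{i=1}^n(a_i+a_{n+i})w_i$. *)

(* Defs.v *)
From HB Require Import structures.
From mathcomp Require Import all_boot all_order all_algebra.
From mathcomp Require Import complex.
From mathcomp Require Import all_classical all_reals all_analysis.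
Set Implicit Arguments. Unset Strict Implicit. Unset Printing Implicit Defensive.
Import Order.TTheory GRing.Theory Num.Theory.
Import numFieldNormedType.Exports.
Local Open Scope ring_scope.

Definition norm2 (R : realType) (N : nat) (v : 'rV[R]_N) : R :=
  Num.sqrt (\sum_(k < N) v 0 k ^+ 2).

Definition grad (R : realType) (N : nat) (f : 'rV[R]_N -> R^o) (x : 'rV[R]_N)
  : 'rV[R]_N := \row_(k < N) ('d f x (delta_mx 0 k) : R).

Definition ppart (R : realType) (t : R) : R := Num.max t 0.

Definition wgt (R : realType) (n : nat) (A : 'M[R]_n) (i : 'I_n) : R :=
  (\sum_(j < n) `|A i j|)^-1.

Definition Atp (R : realType) (n : nat) (A : 'M[R]_n) : 'M[R]_n :=
  \matrix_(i, j) ppart (wgt A i * A i j).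
Definition Atm (R : realType) (n : nat) (A : 'M[R]_n) : 'M[R]_n :=
  \matrix_(i, j) ppart (- (wgt A i * A i j)).

Definition Asde (R : realType) (n : nat) (A : 'M[R]_n) : 'M[R]_(n + n) :=
  block_mx (Atp A) (Atm A) (Atp A) (Atm A).

Definition simple_one_rest_in_disk (R : realType) (p : nat) (M : 'M[R]_p) : Prop :=
  let Mc := map_mx (fun r : R => (r%:C)%C) M in
  mup 1 (char_poly Mc) = 1%N /\
  forall lam : R[i], eigenvalue Mc lam -> lam != 1 -> `|lam| < 1.

Definition gfun (R : realType) (N n m : nat) (B : 'M[R]_(n, m))
  (fl : 'I_m -> 'rV[R]_N -> R) (i : 'I_n) : 'rV[R]_N -> R^o :=
  fun x => \sum_(l < m) B i l * fl l x.

Definition ffun_sum (R : realType) (N m : nat) (fl : 'I_m -> 'rV[R]_N -> R)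
  : 'rV[R]_N -> R^o := fun x => \sum_(l < m) fl l x.

Definition codgrad_iter (R : realType) (N n m : nat) (A : 'M[R]_n) (B : 'M[R]_(n, m))
  (fl : 'I_m -> 'rV[R]_N -> R) (alpha : nat -> R) (x : nat -> 'I_n -> 'rV[R]_N) : Prop :=
  forall k i,
    x k.+1 i =
      \sum_(j < n) wgt A i *:
        (ppart (A i j) *: (x k j - alpha k *: grad (gfun B fl j) (x k j))
         + ppart (- A i j) *: (x k j + alpha k *: grad (gfun B fl j) (x k j))).

(* Main.v *)
Set Warnings "-all".
Require Import Defs.
From HB Require Import structures.
From mathcomp Require Import all_boot all_order all_algebra.
From mathcomp Require Import complex.
From mathcomp Require Import all_classical all_reals all_analysis.
From mathcomp Require Import ring lra.
Import Order.TTheory GRing.Theory Num.Theory.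
Import numFieldNormedType.Exports.
Local Open Scope ring_scope.
Section Norm.
Variables (R : realType) (N : nat).

Lemma CS (u v : 'I_N -> R) :
  (\sum_k u k * v k) ^+ 2 <= (\sum_k u k ^+ 2) * (\sum_k v k ^+ 2).
Proof.
have E : 2 * ((\sum_k u k ^+ 2) * (\sum_k v k ^+ 2) - (\sum_k u k * v k) ^+ 2)
   = \sum_i \sum_j (u i * v j - u j * v i) ^+ 2.
  have -> : \sum_i \sum_j (u i * v j - u j * v i) ^+ 2 =
     \sum_i \sum_j (u i ^+ 2 * v j ^+ 2) + \sum_i \sum_j (u j ^+ 2 * v i ^+ 2)
     - 2 * \sum_i \sum_j (u i * v i * (u j * v j)).
    rewrite -big_split /= mulr_sumr -sumrB; apply: eq_bigr => i _.
    rewrite -big_split /= mulr_sumr -sumrB; apply: eq_bigr => j _; ring.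
  rewrite [X in _ + X - _]exchange_big /=.
  rewrite expr2 !mulr_suml.
  have -> : \sum_i \sum_j u i ^+ 2 * v j ^+ 2 = \sum_i u i ^+ 2 * \sum_j v j ^+ 2.
    by apply: eq_bigr => i _; rewrite mulr_sumr.
  have -> : \sum_i \sum_j u i * v i * (u j * v j) = \sum_i u i * v i * \sum_j u j * v j.
    by apply: eq_bigr => i _; rewrite mulr_sumr.
  ring.
have : 0 <= \sum_i \sum_j (u i * v j - u j * v i) ^+ 2.
  by apply: sumr_ge0 => i _; apply: sumr_ge0 => j _; apply: sqr_ge0.
rewrite -E; lra.
Qed.

Lemma norm2_ge0 (v : 'rV[R]_N) : 0 <= norm2 v.
Proof. exact: sqrtr_ge0. Qed.

Lemma norm2_0 : norm2 (0 : 'rV[R]_N) = 0.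
Proof. by rewrite /norm2 big1 ?sqrtr0 // => k _; rewrite mxE expr0n. Qed.

Lemma norm2Z (c : R) (v : 'rV[R]_N) : norm2 (c *: v) = `|c| * norm2 v.
Proof.
rewrite /norm2 (eq_bigr (fun k => c ^+ 2 * v 0 k ^+ 2)); last first.
  by move=> k _; rewrite mxE exprMn.
by rewrite -mulr_sumr sqrtrM ?sqr_ge0 // sqrtr_sqr.
Qed.

Lemma norm2D (u v : 'rV[R]_N) : norm2 (u + v) <= norm2 u + norm2 v.
Proof.
have hu := norm2_ge0 u; have hv := norm2_ge0 v.
rewrite -(ger0_norm (addr_ge0 hu hv)) -sqrtr_sqr ler_sqrt ?sqr_ge0 //.
have su : norm2 u ^+ 2 = \sum_k u 0 k ^+ 2 by rewrite sqr_sqrtr // sumr_ge0 // => k _; apply: sqr_ge0.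
have sv : norm2 v ^+ 2 = \sum_k v 0 k ^+ 2 by rewrite sqr_sqrtr // sumr_ge0 // => k _; apply: sqr_ge0.
have cs : \sum_k u 0 k * v 0 k <= norm2 u * norm2 v.
  apply: le_trans (ler_norm _) _.
  rewrite -sqrtr_sqr -(ger0_norm (mulr_ge0 hu hv)) -sqrtr_sqr ler_sqrt ?sqr_ge0 //.
  by rewrite exprMn su sv; apply: CS.
rewrite (eq_bigr (fun k => u 0 k ^+ 2 + v 0 k ^+ 2 + 2 * (u 0 k * v 0 k))); last first.
  by move=> k _; rewrite mxE; ring.
rewrite !big_split /= -mulr_sumr -su -sv.
have -> : (norm2 u + norm2 v) ^+ 2 = norm2 u ^+ 2 + norm2 v ^+ 2 + 2 * (norm2 u * norm2 v) by ring.
by rewrite lerD2l ler_pM2l.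
Qed.

Lemma norm2_sum (I : finType) (c : I -> R) (w : I -> 'rV[R]_N) :
  norm2 (\sum_i c i *: w i) <= \sum_i `|c i| * norm2 (w i).
Proof.
apply: (big_ind2 (fun v r => norm2 v <= r)).
- by rewrite norm2_0.
- by move=> v1 r1 v2 r2 h1 h2; apply: le_trans (norm2D _ _) _; apply: lerD.
- by move=> i _; rewrite norm2Z.
Qed.
End Norm.
Section Grad.
Variables (R : realType) (N : nat).

Lemma d_sum (n : nat) (F : 'I_n -> 'rV[R]_N -> R^o) (y v : 'rV[R]_N) :
  (forall j, differentiable (F j) y) ->
  'd (\sum_(j < n) F j) y v = \sum_(j < n) 'd (F j) y v.
Proof.
elim: n F => [|n IH] F hF.
  by rewrite !big_ord0 (_ : 0 = cst 0) // diff_cst.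
rewrite !big_ord_recr /= diffD //=; last exact: differentiable_sum.
by rewrite IH.
Qed.

Lemma grad_lin (n : nat) (c : 'I_n -> R) (F : 'I_n -> 'rV[R]_N -> R^o) (y : 'rV[R]_N) :
  (forall j, differentiable (F j) y) ->
  grad (\sum_(j < n) c j *: F j) y = \sum_(j < n) c j *: grad (F j) y.
Proof.
move=> hF; apply/rowP => k; rewrite !mxE summxE d_sum; last first.
  by move=> j; apply: differentiableZ.
apply: eq_bigr => j _; rewrite diffZ //= !mxE.
by [].
Qed.
End Grad.
Lemma le_bigmaxR (R : realType) (n : nat) (F : 'I_n -> R) (j : 'I_n) :
  F j <= \big[Num.max/0]_(i < n) F i.
Proof. by rewrite (bigD1 j) //= le_max lexx. Qed.

Lemma ppartB (R : realType) (t : R) : ppart t - ppart (- t) = t.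
Proof.
rewrite /ppart /Order.max /=.
case: (ltrP t 0) => h1; case: (ltrP (- t) 0) => h2; lra.
Qed.

Theorem proposition5 (R : realType) (N n m : nat)
  (fl : 'I_m -> 'rV[R]_N -> R) (B : 'M[R]_(n, m)) (A : 'M[R]_n)
  (hAB : A *m B = const_mx 1)
  (hdiff : forall (i : 'I_n) (x : 'rV[R]_N), differentiable (gfun B fl i) x)
  (alpha : nat -> R) (halpha : forall k, 0 < alpha k)
  (x : nat -> 'I_n -> 'rV[R]_N) (hiter : codgrad_iter A B fl alpha x)
  (a : 'rV[R]_(n + n))
  (ha_fix : a *m Asde A = a) (ha_sum : \sum_(i < n + n) a 0 i = 1)
  (hspec : simple_one_rest_in_disk (Asde A))
  (L : R) (hL : 0 < L)
  (hLip : forall (i : 'I_n) (y z : 'rV[R]_N),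
     norm2 (grad (gfun B fl i) y - grad (gfun B fl i) z) <= L * norm2 (y - z)) :
  let xbar := fun k => \sum_(i < n) (a 0 (lshift n i) + a 0 (rshift n i)) *: x k i in
  let wt := \sum_(i < n) (a 0 (lshift n i) + a 0 (rshift n i)) * wgt A i in
  forall k : nat,
    norm2 (\sum_(i < n) (a 0 (lshift n i) - a 0 (rshift n i)) *: grad (gfun B fl i) (x k i)
           - wt *: grad (ffun_sum fl) (xbar k))
    <= L * (\sum_(i < n + n) `|a 0 i|) * \big[Num.max/0]_(i < n) norm2 (x k i - xbar k).
Proof.
move=> xbar wt k.
set p := fun i => a 0 (lshift n i).
set q := fun i => a 0 (rshift n i).
set G := fun j => gfun B fl j.
have hfix : forall j, p j - q j = \sum_i (p i + q i) * (wgt A i * A i j).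
  move=> j.
  have e1 : p j = \sum_i p i * Atp A i j + \sum_i q i * Atp A i j.
    rewrite /p -{1}ha_fix mxE big_split_ord /=.
    by congr (_ + _); apply: eq_bigr => i _; rewrite /Asde ?block_mxEul ?block_mxEdl.
  have e2 : q j = \sum_i p i * Atm A i j + \sum_i q i * Atm A i j.
    rewrite /q -{1}ha_fix mxE big_split_ord /=.
    by congr (_ + _); apply: eq_bigr => i _; rewrite /Asde ?block_mxEur ?block_mxEdr.
  rewrite e1 e2 opprD addrACA -!sumrB -big_split /=; apply: eq_bigr => i _.
  rewrite /Atp /Atm !mxE.
  transitivity ((p i + q i) * (ppart (wgt A i * A i j) - ppart (- (wgt A i * A i j)))).
    ring.
  by rewrite ppartB.
have hf : forall i y, grad (ffun_sum fl) y = \sum_j A i j *: grad (G j) y.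
  move=> i y; rewrite -grad_lin //.
  congr grad; apply/funext => z.
  transitivity (\sum_j A i j * G j z); last by rewrite fct_sumE.
  rewrite /ffun_sum /G /gfun /=.
  under [RHS]eq_bigr do rewrite mulr_sumr.
  rewrite exchange_big /=; apply: eq_bigr => l _.
  rewrite (eq_bigr (fun j => A i j * B j l * fl l z)); last by move=> j _; rewrite mulrA.
  rewrite -mulr_suml.
  have -> : \sum_j A i j * B j l = 1 by move: (congr1 (fun (M : 'M[R]_(n, m)) => M i l) hAB); rewrite !mxE.
  by rewrite mul1r.
move: hfix hf; rewrite /p /q /G /= => hfix hf.
set M := \big[Num.max/0]_(i < n) norm2 (x k i - xbar k).
have hwt : wt *: grad (ffun_sum fl) (xbar k) =
    \sum_j (a 0 (lshift n j) - a 0 (rshift n j)) *: grad (gfun B fl j) (xbar k).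
  rewrite /wt scaler_suml.
  transitivity (\sum_i \sum_j ((a 0 (lshift n i) + a 0 (rshift n i)) * wgt A i * A i j)
                  *: grad (gfun B fl j) (xbar k)).
    apply: eq_bigr => i _; rewrite (hf i) scaler_sumr; apply: eq_bigr => j _.
    by rewrite scalerA.
  rewrite exchange_big /=; apply: eq_bigr => j _; rewrite hfix scaler_suml.
  by apply: eq_bigr => i _; rewrite mulrA.
rewrite hwt -sumrB.
rewrite (eq_bigr (fun j => (a 0 (lshift n j) - a 0 (rshift n j)) *:
   (grad (gfun B fl j) (x k j) - grad (gfun B fl j) (xbar k)))); last first.
  by move=> j _; rewrite scalerBr.
apply: le_trans; first exact: norm2_sum.
apply: (@le_trans _ _ (\sum_j (`|a 0 (lshift n j)| + `|a 0 (rshift n j)|) * (L * M))).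
  apply: ler_sum => j _; apply: ler_pM.
  - exact: normr_ge0.
  - exact: norm2_ge0.
  - exact: ler_normB.
  - apply: le_trans (hLip _ _ _) _; rewrite ler_pM2l //.
    rewrite /M; exact: le_bigmaxR.
rewrite -mulr_suml big_split_ord /= -big_split /= le_eqVlt; apply/orP; left.
apply/eqP; ring.
Qed.
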